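(* Let $N=2$, $\alpha>1$, and $H_\alpha=\frac{1}{\alpha}\begin{pmatrix}1&\alpha-1\\1&\alpha-1\end{pmatrix}$. Then $$\tau_t(H_\alpha)\longrightarrow\frac{\alpha^2}{2+2(\alpha-1)^2}\qquad\text{as }t\to\infty.$$
   Context: Let $X$ be a square-integrable real random variable with $\mathbb E X=\theta$ and $\mathrm{Var}(X)=\sigma^2>0$. Let $N=2$. For $i\in\{1,2\}$ and $t\geq 1$ let $X_t^{(i)}$ be random variables distributed as $X$, mutually independent over both $i$ and $t$, and write $\mathbf X_t=(X_t^{(1)},X_t^{(2)})^\top$. For a $2\times2$ stochastic matrix $A$ define $\hat{\boldsymbol\theta}_1=\mathbf X_1$ and $\hat{\boldsymbol\theta}_{t+1}=\frac{t}{t+1}A\hat{\boldsymbol\theta}_t+\frac{1}{t+1}\mathbf X_{t+1}$ for $t\geq 1$. Let $\bar{\mathbb X}_{2t}=\frac{1}{2t}\sum_{i=1}^2\sum_{k=1}^t X_k^{(i)}$, $\mathbf 1=(1,1)^\top$, $\|\cdot\|$ the Euclidean norm, and $\tau_t(A)=\dfrac{\mathbb E\|(\bar{\mathbb X}_{2t}-\theta)\mathbf 1\|^2}{\mathbb E\|\hat{\boldsymbol\theta}_t-\theta\mathbf 1\|^2}$. *)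

(* Defs.v *)
From Stdlib Require Import Reals Lra.
Open Scope R_scope.

(* A 2x2 real matrix, indices 0 and 1. *)
Definition mat2 := nat -> nat -> R.

Definition stochastic (A : mat2) : Prop :=
  (forall i j, (i < 2)%nat -> (j < 2)%nat -> 0 <= A i j) /\
  (forall i, (i < 2)%nat -> A i 0%nat + A i 1%nat = 1).

Definition H (alpha : R) : mat2 :=
  fun i j => if Nat.eqb j 0 then 1 / alpha else (alpha - 1) / alpha.

(* Random variables on a sample space Om; X t i is X_t^{(i+1)} (t >= 1, i in {0,1}). *)
Section Est.
Variable Om : Type.
Variable X : nat -> nat -> Om -> R.
Variable A : mat2.

(* hat n = \hat\theta_{n+1} (a pair, given as a function of the component index). *)
Fixpoint hat (n : nat) : nat -> Om -> R :=
  match n with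
  | O => fun i w => X 1%nat i w
  | S m => fun i w =>
      INR (S m) / INR (S (S m)) * (A i 0%nat * hat m 0%nat w + A i 1%nat * hat m 1%nat w)
      + 1 / INR (S (S m)) * X (S (S m)) i w
  end.

Definition theta_hat (t : nat) : nat -> Om -> R := hat (t - 1).

Definition Xbar (t : nat) (w : Om) : R :=
  / (2 * INR t) * sum_f_R0 (fun k => X (S k) 0%nat w + X (S k) 1%nat w) (t - 1).
End Est.

(* tau_t(A) = E||(Xbar_{2t} - theta) 1||^2 / E||theta_hat_t - theta 1||^2 *)
Definition tau (Om : Type) (E : (Om -> R) -> R) (X : nat -> nat -> Om -> R)
  (theta : R) (A : mat2) (t : nat) : R :=
  E (fun w => (Xbar Om X t w - theta) ^ 2 + (Xbar Om X t w - theta) ^ 2) /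
  E (fun w => (theta_hat Om X A t 0%nat w - theta) ^ 2
            + (theta_hat Om X A t 1%nat w - theta) ^ 2).

(* Main.v *)
Require Import Defs.
From Stdlib Require Import Reals Lra Lia FunctionalExtensionality.
From Coquelicot Require Import Coquelicot.
Open Scope R_scope.

Definition ee {Om} (X : nat -> nat -> Om -> R) theta k i (w : Om) := X k i w - theta.

Definition SS {Om} (X : nat -> nat -> Om -> R) theta a b m (w : Om) :=
  sum_f_R0 (fun k => a * ee X theta (S k) 0%nat w + b * ee X theta (S k) 1%nat w) m.

Section Aux.
Variable Om : Type.
Variable E : (Om -> R) -> R.
Variable X : nat -> nat -> Om -> R.
Variables theta sigma : R.
Hypothesis Hadd : forall f g, E (fun w => f w + g w) = E f + E g.
Hypothesis Hsc : forall (c : R) f, E (fun w => c * f w) = c * E f.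
Hypothesis Hvar : forall k i, (1 <= k)%nat -> (i < 2)%nat ->
       E (fun w => (X k i w - theta) ^ 2) = sigma ^ 2.
Hypothesis Hcov : forall k i l j, (1 <= k)%nat -> (1 <= l)%nat -> (i < 2)%nat -> (j < 2)%nat ->
       (k <> l \/ i <> j) ->
       E (fun w => (X k i w - theta) * (X l j w - theta)) = 0.

Lemma E_ext f g : (forall w, f w = g w) -> E f = E g.
Proof. intros h; f_equal; apply functional_extensionality; auto. Qed.

Lemma E2 a b f g : E (fun w => a * f w + b * g w) = a * E f + b * E g.
Proof.
  rewrite (Hadd (fun w => a * f w) (fun w => b * g w)), Hsc, Hsc; reflexivity.
Qed.

Lemma E3 a b c f g h : E (fun w => a * f w + b * g w + c * h w) = a * E f + b * E g + c * E h.
Proof.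
  rewrite (Hadd (fun w => a * f w + b * g w) (fun w => c * h w)), E2, Hsc; reflexivity.
Qed.

Lemma E4 a b c d f g h k : E (fun w => a * f w + b * g w + c * h w + d * k w)
   = a * E f + b * E g + c * E h + d * E k.
Proof.
  rewrite (Hadd (fun w => a * f w + b * g w + c * h w) (fun w => d * k w)), E3, Hsc; reflexivity.
Qed.

Lemma cross k l a b c d : (1 <= k)%nat -> (1 <= l)%nat ->
  E (fun w => (a * ee X theta k 0 w + b * ee X theta k 1 w) * (c * ee X theta l 0 w + d * ee X theta l 1 w))
  = if Nat.eq_dec k l then (a*c + b*d) * sigma^2 else 0.
Proof.
  intros hk hl.
  rewrite (E_ext _ (fun w => (a*c) * ((X k 0 w - theta) * (X l 0 w - theta))
     + (a*d) * ((X k 0 w - theta) * (X l 1 w - theta))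
     + (b*c) * ((X k 1 w - theta) * (X l 0 w - theta))
     + (b*d) * ((X k 1 w - theta) * (X l 1 w - theta)))).
  2:{ intro w; unfold ee; ring. }
  rewrite E4.
  destruct (Nat.eq_dec k l) as [<-|n].
  - rewrite (Hcov k 0 k 1), (Hcov k 1 k 0) by (auto; lia).
    rewrite (E_ext (fun w => (X k 0 w - theta) * (X k 0 w - theta)) (fun w => (X k 0%nat w - theta)^2)) by (intro; ring).
    rewrite (E_ext (fun w => (X k 1 w - theta) * (X k 1 w - theta)) (fun w => (X k 1%nat w - theta)^2)) by (intro; ring).
    rewrite !Hvar by lia. ring.
  - rewrite !Hcov by (auto; lia). ring.
Qed.

Lemma Scross a b c d m j : (m + 2 <= j)%nat ->
  E (fun w => SS X theta a b m w * (c * ee X theta j 0 w + d * ee X theta j 1 w)) = 0.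
Proof.
  induction m as [|m IH]; intros hj.
  - unfold SS; simpl. rewrite cross by lia.
    destruct (Nat.eq_dec 1 j); [lia|reflexivity].
  - rewrite (E_ext _ (fun w => 1 * (SS X theta a b m w * (c * ee X theta j 0 w + d * ee X theta j 1 w))
       + 1 * ((a * ee X theta (S (S m)) 0 w + b * ee X theta (S (S m)) 1 w) * (c * ee X theta j 0 w + d * ee X theta j 1 w)))).
    2:{ intro w; unfold SS; simpl. ring. }
    rewrite E2, IH by lia. rewrite cross by lia.
    destruct (Nat.eq_dec (S (S m)) j); [lia|ring].
Qed.

Lemma Ssq a b m : E (fun w => SS X theta a b m w ^ 2) = INR (S m) * (a*a+b*b) * sigma^2.
Proof.
  induction m as [|m IH].
  - unfold SS; simpl.
    rewrite (E_ext _ (fun w => (a * ee X theta 1 0 w + b * ee X theta 1 1 w) * (a * ee X theta 1 0 w + b * ee X theta 1 1 w))) by (intro; ring).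
    rewrite cross by lia. destruct (Nat.eq_dec 1 1); [ring|lia].
  - rewrite (E_ext _ (fun w => 1 * (SS X theta a b m w ^ 2)
       + 2 * (SS X theta a b m w * (a * ee X theta (S (S m)) 0 w + b * ee X theta (S (S m)) 1 w))
       + 1 * ((a * ee X theta (S (S m)) 0 w + b * ee X theta (S (S m)) 1 w) * (a * ee X theta (S (S m)) 0 w + b * ee X theta (S (S m)) 1 w)))).
    2:{ intro w; unfold SS; simpl. ring. }
    rewrite E3, IH, Scross by lia. rewrite cross by lia.
    destruct (Nat.eq_dec (S (S m)) (S (S m))); [|lia].
    rewrite !S_INR. ring.
Qed.

End Aux.

Lemma hat_S Om X alpha m i (w : Om) : hat Om X (H alpha) (S m) i w =
  INR (S m) / INR (S (S m)) * (1/alpha * hat Om X (H alpha) m 0 w + (alpha-1)/alpha * hat Om X (H alpha) m 1 w)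
  + 1 / INR (S (S m)) * X (S (S m)) i w.
Proof. reflexivity. Qed.

Lemma hat_c Om X theta alpha : 0 < alpha -> forall m (w : Om),
  1/alpha * hat Om X (H alpha) m 0 w + (alpha-1)/alpha * hat Om X (H alpha) m 1 w - theta
  = SS X theta (1/alpha) ((alpha-1)/alpha) m w / INR (S m).
Proof.
  intros ha m w. induction m as [|m IH].
  - unfold SS, ee; simpl. field. lra.
  - rewrite !hat_S.
    unfold SS in *. cbn [sum_f_R0].
    set (n := INR (S m)) in *. set (n2 := INR (S (S m))).
    assert (hn : 0 < n) by (unfold n; apply lt_0_INR; lia).
    assert (hn2 : 0 < n2) by (unfold n2; apply lt_0_INR; lia).
    set (c := 1/alpha * hat Om X (H alpha) m 0 w + (alpha-1)/alpha * hat Om X (H alpha) m 1 w) in *.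
    set (F := sum_f_R0 _ m) in *.
    assert (hc : c = theta + F / n) by lra.
    rewrite hc. unfold ee. replace n2 with (n + 1) by (unfold n, n2; rewrite (S_INR (S m)); ring).
    field. lra.
Qed.

Lemma hat_Y Om X theta alpha : 0 < alpha -> forall m i (w : Om),
  hat Om X (H alpha) (S m) i w - theta
  = (SS X theta (1/alpha) ((alpha-1)/alpha) m w + ee X theta (S (S m)) i w) / INR (S (S m)).
Proof.
  intros ha m i w. rewrite hat_S.
  pose proof (hat_c Om X theta alpha ha m w) as hc.
  set (c := 1/alpha * hat Om X (H alpha) m 0 w + (alpha-1)/alpha * hat Om X (H alpha) m 1 w) in *.
  assert (hn : 0 < INR (S m)) by (apply lt_0_INR; lia).
  replace c with (theta + SS X theta (1/alpha) ((alpha-1)/alpha) m w / INR (S m)) by lra.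
  unfold ee. rewrite (S_INR (S m)). field. lra.
Qed.

Lemma Xbar_S Om X theta n (w : Om) :
  Xbar Om X (S n) w - theta = SS X theta 1 1 n w / (2 * INR (S n)).
Proof.
  unfold Xbar. replace (S n - 1)%nat with n by lia.
  assert (hn : 0 < INR (S n)) by (apply lt_0_INR; lia).
  assert (hs : sum_f_R0 (fun k => X (S k) 0%nat w + X (S k) 1%nat w) n = SS X theta 1 1 n w + 2 * INR (S n) * theta).
  { unfold SS, ee. induction n as [|n IH].
    - simpl. ring.
    - cbn [sum_f_R0]. rewrite IH by (apply lt_0_INR; lia). rewrite (S_INR (S n)). ring. }
  rewrite hs. field. lra.
Qed.

Lemma lim_v q : 0 < q ->
  is_lim_seq (fun m => (INR m + 2) / (2 * (INR m + 1) * q + 2)) (1 / (2 * q)).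
Proof.
  intros hq.
  assert (h0 : is_lim_seq (fun m => / INR (S m)) 0).
  { apply (is_lim_seq_incr_1 (fun m => / INR m) 0).
    pose proof (is_lim_seq_inv INR p_infty is_lim_seq_INR) as h.
    simpl in h. apply h. discriminate. }
  apply is_lim_seq_ext with (u := fun m => (1 + / INR (S m)) / (2 * q + 2 * / INR (S m))).
  { intro m. assert (hm : 0 < INR (S m)) by (apply lt_0_INR; lia).
    rewrite S_INR in *. field. split; nra. }
  replace (1 / (2 * q)) with ((1 + 0) / (2 * q + 2 * 0)) by (field; lra).
  apply is_lim_seq_div'.
  - apply is_lim_seq_plus'. apply is_lim_seq_const. exact h0.
  - apply is_lim_seq_plus'. apply is_lim_seq_const.
    exact (is_lim_seq_scal_l _ 2 0 h0).
  - lra.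
Qed.

Theorem mainTheorem7 :
  forall (Om : Type) (E : (Om -> R) -> R) (X : nat -> nat -> Om -> R)
         (theta sigma alpha : R),
    (* E is a linear expectation functional *)
    (forall f g, E (fun w => f w + g w) = E f + E g) ->
    (forall (c : R) f, E (fun w => c * f w) = c * E f) ->
    (* each X_t^{(i)} has mean theta and variance sigma^2 > 0 *)
    0 < sigma ->
    (forall k i, (1 <= k)%nat -> (i < 2)%nat -> E (X k i) = theta) ->
    (forall k i, (1 <= k)%nat -> (i < 2)%nat ->
       E (fun w => (X k i w - theta) ^ 2) = sigma ^ 2) ->
    (* pairwise independence (used only through uncorrelatedness) *)
    (forall k i l j, (1 <= k)%nat -> (1 <= l)%nat -> (i < 2)%nat -> (j < 2)%nat ->
       (k <> l \/ i <> j) ->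
       E (fun w => (X k i w - theta) * (X l j w - theta)) = 0) ->
    1 < alpha ->
    Un_cv (fun n => tau Om E X theta (H alpha) (S n))
          (alpha ^ 2 / (2 + 2 * (alpha - 1) ^ 2)).
Proof.
  intros Om E X theta sigma alpha Hadd Hsc hs _ Hvar Hcov ha.
  set (q := (1/alpha) * (1/alpha) + (alpha-1)/alpha * ((alpha-1)/alpha)).
  assert (hq : 0 < q).
  { unfold q. assert (0 < 1/alpha) by (apply Rdiv_lt_0_compat; lra). nra. }
  apply is_lim_seq_Reals.
  apply is_lim_seq_incr_1.
  apply is_lim_seq_ext with (u := fun m => (INR m + 2) / (2 * (INR m + 1) * q + 2)).
  2:{ replace (alpha ^ 2 / (2 + 2 * (alpha - 1) ^ 2)) with (1 / (2 * q)).
      apply lim_v; exact hq.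
      unfold q. field. split; [nra|split; [lra|nra]]. }
  intro m. unfold tau.
  set (F := SS X theta (1/alpha) ((alpha-1)/alpha) m).
  set (n1 := INR (S (S m))).
  assert (hn1 : 0 < n1) by (apply lt_0_INR; lia).
  rewrite (E_ext Om E (fun w => (Xbar Om X (S (S m)) w - theta) ^ 2 + (Xbar Om X (S (S m)) w - theta) ^ 2)
             (fun w => (2 / (2 * n1) ^ 2) * (SS X theta 1 1 (S m) w ^ 2))).
  2:{ intro w. rewrite Xbar_S. fold n1. field. lra. }
  rewrite Hsc, (Ssq Om E X theta sigma Hadd Hsc Hvar Hcov).
  change (theta_hat Om X (H alpha) (S (S m))) with (hat Om X (H alpha) (S m)).
  rewrite (E_ext Om E _
     (fun w => (2 / n1 ^ 2) * (F w ^ 2)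
        + (2 / n1 ^ 2) * (F w * (1 * ee X theta (S (S m)) 0 w + 1 * ee X theta (S (S m)) 1 w))
        + (1 / n1 ^ 2) * ((1 * ee X theta (S (S m)) 0 w + 0 * ee X theta (S (S m)) 1 w) * (1 * ee X theta (S (S m)) 0 w + 0 * ee X theta (S (S m)) 1 w))
        + (1 / n1 ^ 2) * ((0 * ee X theta (S (S m)) 0 w + 1 * ee X theta (S (S m)) 1 w) * (0 * ee X theta (S (S m)) 0 w + 1 * ee X theta (S (S m)) 1 w)))).
  2:{ intro w. rewrite !(hat_Y Om X theta alpha) by lra. fold n1 F. field. lra. }
  rewrite (E4 Om E Hadd Hsc).
  unfold F. rewrite (Ssq Om E X theta sigma Hadd Hsc Hvar Hcov).
  rewrite (Scross Om E X theta sigma Hadd Hsc Hvar Hcov) by lia.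
  rewrite !(cross Om E X theta sigma Hadd Hsc Hvar Hcov) by lia.
  destruct (Nat.eq_dec (S (S m)) (S (S m))); [|lia].
  fold q. unfold n1. rewrite !S_INR.
  assert (0 < INR m + 1) by (pose proof (pos_INR m); lra).
  assert (0 < sigma ^ 2) by (apply pow_lt; lra). assert (0 < (INR m + 1) * q * sigma ^ 2) by (apply Rmult_lt_0_compat; [apply Rmult_lt_0_compat|]; lra). field. split; [lra|split; nra].
Qed.
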